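(* Consider the system $\mathbf{x}_{k+1}=f_k(\mathbf{x}_k,\mathbf{w}_k)$, $\mathbf{y}_k=g_k(\mathbf{x}_k,\mathbf{v}_k)$, $k\in\mathbb{N}_0$, and assume that for every $k\in\mathbb{N}_0$ the uncertain variables $\mathbf{w}_0,\dots,\mathbf{w}_k,\mathbf{v}_0,\dots,\mathbf{v}_k,\mathbf{x}_0$ are unrelated. Then for every $k\in\mathbb{Z}_+$ and every $(x_{0:k-1},y_{0:k-1})\in\llbracket\mathbf{x}_{0:k-1},\mathbf{y}_{0:k-1}\rrbracket$, \[ \llbracket\mathbf{x}_k\,|\,x_{0:k-1},y_{0:k-1}\rrbracket=\llbracket\mathbf{x}_k\,|\,x_{k-1}\rrbracket, \] and for every $k\in\mathbb{N}_0$ and every $(x_{0:k},y_{0:k-1})\in\llbracket\mathbf{x}_{0:k},\mathbf{y}_{0:k-1}\rrbracket$, \[ \llbracket\mathbf{y}_k\,|\,x_{0:k},y_{0:k-1}\rrbracket=\llbracket\mathbf{y}_k\,|\,x_k\rrbracket . \]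
   Context: Uncertain variables: fix a nonempty set $\Omega$. An uncertain variable is a (measurable) function $\mathbf{x}\colon\Omega\to\mathcal{X}$; a realization is $x=\mathbf{x}(\omega)$. Tuples such as $\mathbf{x}_{0:k}:=(\mathbf{x}_0,\dots,\mathbf{x}_k)$ are regarded as uncertain variables $\omega\mapsto(\mathbf{x}_0(\omega),\dots,\mathbf{x}_k(\omega))$. Range: $\llbracket\mathbf{x}\rrbracket:=\{\mathbf{x}(\omega):\omega\in\Omega\}$; joint range $\llbracket\mathbf{u}_1,\dots,\mathbf{u}_r\rrbracket:=\{(\mathbf{u}_1(\omega),\dots,\mathbf{u}_r(\omega)):\omega\in\Omega\}$. Conditional range: $\llbracket\mathbf{x}\,|\,y\rrbracket:=\{\mathbf{x}(\omega):\omega\in\Omega,\ \mathbf{y}(\omega)=y\}$ (conditioning on several values means conditioning on the tuple); for $k=0$ the conditioning on $y_{0:-1}$ is empty. Unrelatedness: $\mathbf{u}_1,\dots,\mathbf{u}_r$ are unrelated if $\llbracket\mathbf{u}_1,\dots,\mathbf{u}_r\rrbracket=\llbracket\mathbf{u}_1\rrbracket\times\cdots\times\llbracket\mathbf{u}_r\rrbracket$. System: $f_k\colon\llbracket\mathbf{x}_k\rrbracket\times\llbracket\mathbf{w}_k\rrbracket\to\llbracket\mathbf{x}_{k+1}\rrbracket$, $g_k\colon\llbracket\mathbf{x}_k\rrbracket\times\llbracket\mathbf{v}_k\rrbracket\to\llbracket\mathbf{y}_k\rrbracket$ are maps, with state, process noise, measurement and measurement noise valued in Euclidean spaces, and $\mathbf{x}_{k+1}(\omega)=f_k(\mathbf{x}_k(\omega),\mathbf{w}_k(\omega))$,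 $\mathbf{y}_k(\omega)=g_k(\mathbf{x}_k(\omega),\mathbf{v}_k(\omega))$ for all $\omega\in\Omega$. *)

(* Defs.v *)
From HB Require Import structures.
From mathcomp Require Import all_boot all_order all_algebra.
From mathcomp Require Export classical_sets reals.
Set Implicit Arguments. Unset Strict Implicit. Unset Printing Implicit Defensive.
Local Open Scope classical_set_scope.

Definition condRange (Omega X Y : Type) (u : Omega -> X) (cond : Omega -> Y) (c : Y)
  : set X := [set u om | om in [set om | cond om = c]].

Definition tup (Omega T : Type) (u : nat -> Omega -> T) (k : nat)
  : Omega -> ('I_k -> T) := fun om i => u (nat_of_ord i) om.
Arguments tup {Omega T} u k om i.

(* Unrelatedness of w_0..w_k, v_0..v_k, x_0: the joint range equals the
   product of the individual ranges. *)
Definition unrelated_wvx (Omega A B C : Type) (k : nat)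
  (w : nat -> Omega -> A) (v : nat -> Omega -> B) (x0 : Omega -> C) : Prop :=
  range (fun om => (tup w k.+1 om, tup v k.+1 om, x0 om)) =
  [set abc | (forall i : 'I_(k.+1), range (w i) (abc.1.1 i)) /\
             (forall i : 'I_(k.+1), range (v i) (abc.1.2 i)) /\
             range x0 abc.2].

(* Main.v *)
Require Import Defs.
From mathcomp Require Import all_boot all_order all_algebra classical_sets reals.
From mathcomp Require Import boolp.
Local Open Scope classical_set_scope.

Lemma pick_om (Omega A B C : Type) (k : nat)
  (w : nat -> Omega -> A) (v : nat -> Omega -> B) (x0 : Omega -> C) :
  unrelated_wvx k w v x0 -> forall (om1 om2 : Omega) (pw pv : nat -> bool),
  exists om, (forall i, (i <= k)%N -> w i om = if pw i then w i om1 else w i om2)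
   /\ (forall i, (i <= k)%N -> v i om = if pv i then v i om1 else v i om2)
   /\ x0 om = x0 om1.
Proof.
move=> H om1 om2 pw pv.
have : range (fun om => (tup w k.+1 om, tup v k.+1 om, x0 om))
  ((fun i : 'I_k.+1 => if pw i then w i om1 else w i om2),
   (fun i : 'I_k.+1 => if pv i then v i om1 else v i om2), x0 om1).
  rewrite H /=; split; [|split].
  - by move=> i; case: (pw i); [exists om1|exists om2].
  - by move=> i; case: (pv i); [exists om1|exists om2].
  - by exists om1.
case=> om _ [] Hw Hv Hx; exists om; split; [|split] => // i Hi.
- have := congr1 (fun F => F (Ordinal (Hi : (i < k.+1)%N))) Hw.
  by rewrite /tup /=.
- have := congr1 (fun F => F (Ordinal (Hi : (i < k.+1)%N))) Hv.
  by rewrite /tup /=.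
Qed.

Lemma x_agree (Omega X W : Type) (x : nat -> Omega -> X) (w : nat -> Omega -> W)
  (f : nat -> X -> W -> X) :
  (forall k om, x k.+1 om = f k (x k om) (w k om)) ->
  forall om om0 k, (forall i, (i < k)%N -> w i om = w i om0) -> x 0%N om = x 0%N om0 ->
  forall i, (i <= k)%N -> x i om = x i om0.
Proof.
move=> Hf om om0 k Hw H0; elim=> [//|i IH] Hi.
by rewrite !Hf IH ?(ltnW Hi) // Hw.
Qed.

Theorem mainTheorem8 (R : realType) (Omega : Type) (nx nw ny nv : nat)
  (x : nat -> Omega -> 'rV[R]_nx) (w : nat -> Omega -> 'rV[R]_nw)
  (y : nat -> Omega -> 'rV[R]_ny) (v : nat -> Omega -> 'rV[R]_nv)
  (f : nat -> 'rV[R]_nx -> 'rV[R]_nw -> 'rV[R]_nx)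
  (g : nat -> 'rV[R]_nx -> 'rV[R]_nv -> 'rV[R]_ny) :
  inhabited Omega ->
  (forall k om, x k.+1 om = f k (x k om) (w k om)) ->
  (forall k om, y k om = g k (x k om) (v k om)) ->
  (forall k, unrelated_wvx k w v (x 0%N)) ->
  (forall (k : nat) (xs : 'I_k.+1 -> 'rV[R]_nx) (ys : 'I_k.+1 -> 'rV[R]_ny),
     range (fun om => (tup x k.+1 om, tup y k.+1 om)) (xs, ys) ->
     condRange (x k.+1) (fun om => (tup x k.+1 om, tup y k.+1 om)) (xs, ys)
     = condRange (x k.+1) (x k) (xs ord_max))
  /\
  (forall (k : nat) (xs : 'I_k.+1 -> 'rV[R]_nx) (ys : 'I_k -> 'rV[R]_ny),
     range (fun om => (tup x k.+1 om, tup y k om)) (xs, ys) ->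
     condRange (y k) (fun om => (tup x k.+1 om, tup y k om)) (xs, ys)
     = condRange (y k) (x k) (xs ord_max)).
Proof.
move=> _ Hf Hg Hu; split.
- move=> k xs ys [om0 _ [Hx0 Hy0]]; subst xs ys.
  apply/seteqP; split=> z [om /= Hom <-].
  + by exists om => //=; have := congr1 (fun p => p.1 ord_max) Hom.
  + have [om1 [Hw1 [Hv1 H01]]] :=
      @pick_om _ _ _ _ k w v (x 0%N) (Hu k) om0 om (fun i => (i < k)%N) (fun _ => true).
    have Hxa : forall i, (i <= k)%N -> x i om1 = x i om0.
      apply: (@x_agree _ _ _ x w f Hf om1 om0 k) => // i Hi; rewrite Hw1 ?(ltnW Hi) //= Hi //.
    exists om1.
      rewrite /= /tup; congr pair; apply/funext => i.
      * have Hi : (i <= k)%N by rewrite -ltnS ltn_ord.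
        by rewrite Hxa.
      * have Hi : (i <= k)%N by rewrite -ltnS ltn_ord.
        by rewrite !Hg Hxa // Hv1.
    rewrite /= in Hom.
    by rewrite !Hf Hxa // Hw1 // ltnn Hom.
- move=> k xs ys [om0 _ [Hx0 Hy0]]; subst xs ys.
  apply/seteqP; split=> z [om /= Hom <-].
  + by exists om => //=; have := congr1 (fun p => p.1 ord_max) Hom.
  + have [om1 [Hw1 [Hv1 H01]]] :=
      @pick_om _ _ _ _ k w v (x 0%N) (Hu k) om0 om (fun _ => true) (fun i => (i < k)%N).
    have Hxa : forall i, (i <= k)%N -> x i om1 = x i om0.
      apply: (@x_agree _ _ _ x w f Hf om1 om0 k) => // i Hi; rewrite Hw1 ?(ltnW Hi) //=.
    exists om1.
      rewrite /= /tup; congr pair; apply/funext => i.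
      * have Hi : (i <= k)%N by rewrite -ltnS ltn_ord.
        by rewrite Hxa.
      * have Hi := ltn_ord i.
        by rewrite !Hg Hxa ?(ltnW Hi) // Hv1 ?(ltnW Hi) // Hi.
    rewrite /= in Hom.
    by rewrite !Hg Hxa // Hv1 // ltnn Hom.
Qed.
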